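(* Let $K\subseteq\mathbb{Z}^{S}$ be an M-convex set on a finite ground-set $S$ and let $m$ be a decreasingly minimal element of $K$. Then every decreasingly minimal element of $K$ can be obtained from $m$ by a sequence of at most $|S|$ elementary steps.
   Context: An M-convex set is the set of integral points of an integral base-polyhedron. An element of $K$ is decreasingly minimal if its largest component is as small as possible, within this its second largest as small as possible, and so on. For a decreasingly minimal $m\in K$, an elementary step replaces $m$ by $m'=m+\chi_s-\chi_t$, where $s,t\in S$, $m'\in K$ and $m(t)=m(s)+1$ ($\chi_v$ the unit vector of $v$); the result is again decreasingly minimal. *)

(* Defs.v *)
From HB Require Import structures.
From mathcomp Require Import all_boot all_order all_algebra.
Set Implicit Arguments. Unset Strict Implicit. Unset Printing Implicit Defensive.
Import Order.TTheory GRing.Theory Num.Theory.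
Local Open Scope ring_scope.

Notation vec S := {ffun S -> int}.

(* A set function b : 2^S -> Z ∪ {+oo}; None encodes +oo. *)
Definition setfun (S : finType) := {set S} -> option int.

Definition vsum (S : finType) (x : vec S) (X : {set S}) : int := \sum_(i in X) x i.

(* Submodular inequality b(X)+b(Y) >= b(X∩Y)+b(X∪Y), with the usual
   convention for +oo: whenever b(X), b(Y) are finite, so are b(X∩Y), b(X∪Y),
   and the inequality holds. *)
Definition integral_submodular (S : finType) (b : setfun S) : Prop :=
  [/\ b set0 = Some 0,
      (exists c, b setT = Some c) &
      forall X Y x y, b X = Some x -> b Y = Some y ->
        exists u v, [/\ b (X :&: Y) = Some u, b (X :|: Y) = Some v & u + v <= x + y]].

Definition in_base (S : finType) (b : setfun S) (x : vec S) : Prop :=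
  (forall Z c, b Z = Some c -> vsum x Z <= c) /\ b setT = Some (vsum x setT).

Definition M_convex (S : finType) (K : vec S -> Prop) : Prop :=
  exists b : setfun S, integral_submodular b /\ forall x, K x <-> in_base b x.

Definition decvec (S : finType) (x : vec S) : seq int :=
  sort (fun a c : int => c <= a) [seq x i | i <- enum S].

Fixpoint lexlt (s t : seq int) : bool :=
  match s, t with
  | a :: s', c :: t' => (a < c) || ((a == c) && lexlt s' t')
  | [::], _ :: _ => true
  | _, _ => false
  end.

Definition dec_min (S : finType) (K : vec S -> Prop) (m : vec S) : Prop :=
  K m /\ forall y, K y -> ~~ lexlt (decvec y) (decvec m).

Definition chi (S : finType) (v : S) : vec S := [ffun i => (i == v)%:R].

Definition elem_step (S : finType) (K : vec S -> Prop) (m m' : vec S) : Prop :=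
  dec_min K m /\
  exists s t : S, [/\ m' = m + chi s - chi t, K m' & m t = m s + 1].

Fixpoint reach_le (S : finType) (K : vec S -> Prop) (n : nat) (m m' : vec S) : Prop :=
  match n with
  | 0%N => m = m'
  | n'.+1 => m = m' \/ exists m'', elem_step K m m'' /\ reach_le K n' m'' m'
  end.

(* Main.v *)
Require Import Defs.
From mathcomp Require Import all_boot all_order all_algebra.
From mathcomp Require Import perm zify.
Import Order.TTheory GRing.Theory Num.Theory.
Set Implicit Arguments. Unset Strict Implicit. Unset Printing Implicit Defensive.
Local Open Scope ring_scope.

Definition geR (a c : int) : bool := c <= a.
Definition geP (k : int) : pred int := fun z => k <= z.

Lemma count0_all (p : pred int) (t : seq int) :
  (forall z, z \in t -> ~~ p z) -> count p t = 0%N.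
Proof.
elim: t => //= z t IH H.
rewrite (negbTE (H z (mem_head _ _))) IH // => w wt.
by apply: H; rewrite in_cons wt orbT.
Qed.

Lemma lexlt_count (k : int) (s t : seq int) :
  sorted geR s -> sorted geR t ->
  (forall k', k < k' -> count (geP k') s = count (geP k') t) ->
  (count (geP k) s < count (geP k) t)%N -> lexlt s t.
Proof.
elim: s t => [|x s IH] [|y t] //=; rewrite /geP.
move=> ps pt H Hk.
have tr : transitive geR by move=> a b c; rewrite /geR => h1 h2; exact: le_trans h2 h1.
have As := order_path_min tr ps.
have At := order_path_min tr pt.
case: (ltgtP x y) => [xy|yx|e]; first by [].
- exfalso.
  case: (ltP k x) => kx.
  + have c0 : count (geP x) t = 0%N.
      apply: count0_all => z zt; have := allP At z zt; rewrite /geR /geP => zy.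
      rewrite -ltNge; exact: le_lt_trans zy yx.
    have := H x kx; move: c0; rewrite /geP => ->.
    by rewrite lexx leNgt yx.
  + have c0 : count (geP k) t = 0%N.
      apply: count0_all => z zt; have := allP At z zt; rewrite /geR /geP => zy.
      rewrite -ltNge; apply: le_lt_trans zy _; exact: lt_le_trans yx kx.
    move: Hk; move: c0; rewrite /geP => ->.
    by rewrite [k <= y]leNgt (lt_le_trans yx kx).
- subst y => /=.
  apply: IH.
  + exact: path_sorted ps.
  + exact: path_sorted pt.
  + move=> k' kk'; have := H k' kk'. by move/eqP; rewrite eqn_add2l => /eqP.
  + by move: Hk; rewrite ltn_add2l.
Qed.

Section Vec.
Variable S : finType.
Implicit Types (x y : {ffun S -> int}) (Z : {set S}).

Lemma chiE (v i : S) : chi v i = (i == v)%:R.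
Proof. by rewrite /chi ffunE. Qed.

Lemma stepE x u v i : (x + chi u - chi v) i = x i + (i == u)%:R - (i == v)%:R.
Proof. by rewrite !ffunE. Qed.

Lemma sum_chi Z v : \sum_(i in Z) chi v i = (v \in Z)%:R.
Proof.
case vZ: (v \in Z).
  rewrite (bigD1 v) //= chiE eqxx big1 ?addr0 //.
  by move=> i /andP[_ /negbTE ne]; rewrite chiE ne.
by rewrite big1 // => i iZ; rewrite chiE; case: eqP => // e; move: iZ; rewrite e vZ.
Qed.

Lemma vsum_step x u v Z :
  vsum (x + chi u - chi v) Z = vsum x Z + (u \in Z)%:R - (v \in Z)%:R.
Proof.
rewrite /vsum.
have -> : \sum_(i in Z) (x + chi u - chi v) i = \sum_(i in Z) (x i + chi u i - chi v i).
  by apply: eq_bigr => i _; rewrite !ffunE.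
by rewrite sumrB big_split /= !sum_chi.
Qed.

Lemma vsum_modular x X Y :
  vsum x X + vsum x Y = vsum x (X :&: Y) + vsum x (X :|: Y).
Proof.
rewrite /vsum !(big_mkcond (fun i => i \in _)) -!big_split /=.
apply: eq_bigr => i _; rewrite in_setI in_setU.
by case: (i \in X); case: (i \in Y); rewrite /= ?addr0 ?add0r.
Qed.

Lemma sum_lt (A : {set S}) x y i :
  i \in A -> (forall j, y j <= x j) -> y i < x i ->
  \sum_(j in A) y j < \sum_(j in A) x j.
Proof.
move=> iA le lt.
rewrite (bigD1 i iA) [X in _ < X](bigD1 i iA) /=.
apply: ltr_leD => //. by apply: ler_sum => j _.
Qed.

Lemma sum_leT (A : {set S}) x y :
  (forall j, j \in A -> y j <= x j) -> \sum_(j in A) y j <= \sum_(j in A) x j.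
Proof. by move=> H; apply: ler_sum. Qed.

Lemma eq_of_le b x y : in_base b x -> in_base b y -> (forall i, y i <= x i) -> x = y.
Proof.
move=> [_ bx] [_ by_] le; apply/ffunP => i; apply/eqP; rewrite eq_le le andbT.
rewrite leNgt; apply/negP => lt.
have : vsum y setT < vsum x setT := sum_lt (in_setT i) le lt.
by move: bx; rewrite by_ => -[->]; rewrite ltxx.
Qed.

End Vec.

Lemma exchange (S : finType) (b : setfun S) (x y : {ffun S -> int}) (v : S) :
  integral_submodular b -> in_base b x -> in_base b y -> y v < x v ->
  exists u, x u < y u /\ in_base b (x + chi u - chi v).
Proof.
move=> [b0 _ bsub] [xle xT] [yle yT] yvx.
pose tight (Z : {set S}) := b Z == Some (vsum x Z).
pose P (Z : {set S}) := tight Z && (v \notin Z).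
have tU : forall X Y, tight X -> tight Y -> tight (X :|: Y).
  move=> X Y /eqP tX /eqP tY.
  have [u' [w' [bI bU le]]] := bsub _ _ _ _ tX tY.
  have h1 := xle _ _ bI. have h2 := xle _ _ bU.
  have hm := vsum_modular x X Y.
  apply/eqP; rewrite bU; congr Some; lia.
pose Z0 := \bigcup_(Z | P Z) Z.
have PZ0 : P Z0.
  apply: (big_ind P).
  - by rewrite /P /tight in_set0 b0 /vsum big_set0 eqxx.
  - move=> X Y /andP[tX vX] /andP[tY vY]; rewrite /P tU //= in_setU negb_or vX vY.
    by [].
  - by [].
have subZ0 : forall Z, P Z -> Z \subset Z0 by move=> Z PZ; exact: bigcup_sup.
case: (boolP [exists u, (u \notin Z0) && (x u < y u)]) => [/existsP[u /andP[uZ xy]]|].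
  exists u; split => //.
  have uv : u != v by apply/eqP => e; move: xy; rewrite e ltNge (ltW yvx).
  split.
  - move=> Z c bZ; rewrite vsum_step; have := xle _ _ bZ.
    case uZ': (u \in Z); case vZ: (v \in Z); rewrite /=; try lia.
    move=> le; suff : vsum x Z != c by lia.
    apply/eqP => e.
    have : Z \subset Z0 by apply: subZ0; rewrite /P /tight bZ e eqxx vZ.
    by move/subsetP => /(_ u uZ'); apply/negP.
  - by rewrite vsum_step !in_setT xT; congr Some; lia.
rewrite negb_exists => /forallP H.
exfalso.
have le : forall i, i \in ~: Z0 -> y i <= x i.
  move=> i; rewrite in_setC => iZ; have := H i; rewrite iZ /= leNgt; by [].
have vC : v \in ~: Z0 by rewrite in_setC; case/andP: PZ0.
have s1 : \sum_(i in ~: Z0) y i < \sum_(i in ~: Z0) x i.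
  rewrite (bigD1 v vC) [X in _ < X](bigD1 v vC) /=.
  apply: ltr_leD => //; apply: ler_sum => i /andP[iC _]; exact: le.
have s2 : vsum y Z0 <= vsum x Z0.
  apply: yle; apply/eqP; by case/andP: PZ0.
have dec : forall z : {ffun S -> int}, vsum z setT = vsum z Z0 + \sum_(i in ~: Z0) z i.
  by move=> z; rewrite /vsum (big_setID Z0) /= setTI setTD.
have : vsum y setT < vsum x setT by rewrite !dec; exact: ler_ltD.
by move: xT; rewrite yT => -[->]; rewrite ltxx.
Qed.

Lemma geR_total : total geR.
Proof. by move=> a c; rewrite /geR orbC le_total. Qed.

Lemma count_decvec (S : finType) (x : {ffun S -> int}) (p : pred int) :
  count p (decvec x) = count (fun i => p (x i)) (enum S).
Proof. by rewrite /decvec (seq.permP (permEl (path.perm_sort _ _))) count_map. Qed.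

Lemma count_diff1 (S : finType) (e : seq S) (f g : pred S) (v : S) :
  uniq e -> v \in e -> f v -> ~~ g v -> (forall i, i != v -> f i = g i) ->
  count f e = (count g e).+1.
Proof.
elim: e => //= a e IH /andP[ae ue]; rewrite in_cons => /orP[/eqP e0|ve] fv gv H.
  subst v.
  rewrite fv (negbTE gv) /= add1n add0n; congr _.+1.
  apply: eq_in_count => i ie; apply: H; apply/eqP => e'; by move: ie; rewrite e' (negbTE ae).
have E := IH ue ve fv gv H.
have av : a != v by apply/eqP => e'; move: ve; rewrite -e' (negbTE ae).
by rewrite (H a av) E addnS.
Qed.

Lemma decmin_ineq (S : finType) (K : {ffun S -> int} -> Prop) x (u v : S) :
  dec_min K x -> K (x + chi u - chi v) -> x v <= x u + 1.
Proof.
move=> [Kx Hmin] Ky.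
case: (eqVneq u v) => [->|uv]; first by lia.
rewrite leNgt; apply/negP => lt.
have := Hmin _ Ky; apply/negP/negPn.
have sy : sorted geR (decvec (x + chi u - chi v)) by exact: sort_sorted geR_total _.
have sx : sorted geR (decvec x) by exact: sort_sorted geR_total _.
apply: (lexlt_count (k := x v)) => //.
  move=> k' kk'; rewrite !count_decvec; apply: eq_count => i /=.
  rewrite /geP stepE.
  case: (eqVneq i u) => [eiu|iu].
    subst i; rewrite (negbTE uv) subr0 /=.
    apply/idP/idP => h; lia.
  case: (eqVneq i v) => [eiv|iv].
    subst i; rewrite /= addr0.
    apply/idP/idP => h; lia.
  by rewrite /= addr0 subr0.
rewrite !count_decvec.
rewrite (@count_diff1 S (enum S) (fun i => geP (x v) (x i))
   (fun i => geP (x v) ((x + chi u - chi v) i)) v) ?enum_uniq ?mem_enum //.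
- by rewrite /geP.
- by rewrite /geP stepE eqxx eq_sym (negbTE uv) /=; lia.
- move=> i iv; rewrite /geP stepE (negbTE iv).
  case: (eqVneq i u) => [eiu|iu].
    subst i; rewrite /= subr0; apply/idP/idP => h; lia.
  by rewrite /= addr0 subr0.
Qed.

Lemma decvec_swap (S : finType) (x : {ffun S -> int}) (s t : S) :
  x t = x s + 1 -> decvec (x + chi s - chi t) = decvec x.
Proof.
move=> e.
have st : s != t by apply/eqP => est; move: e; rewrite est; lia.
have E : x + chi s - chi t = [ffun i => x (tperm s t i)].
  apply/ffunP => i; rewrite stepE ffunE.
  case: (eqVneq i s) => [->|ns].
    by rewrite tpermL (negbTE st) /= subr0 e.
  case: (eqVneq i t) => [->|nt].
    by rewrite tpermR /= addr0 e addrK.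
  rewrite /= addr0 subr0 tpermD //; by rewrite eq_sym.
rewrite E /decvec; apply/perm_sortP.
- exact: geR_total.
- by move=> a b c; rewrite /geR => h1 h2; exact: le_trans h2 h1.
- by move=> a b /andP[h1 h2]; apply/eqP; rewrite eq_le h1 h2.
have -> : [seq [ffun i => x (tperm s t i)] i | i <- enum S] = map x (map (tperm s t) (enum S)).
  by elim: (enum S) => //= a l ->; rewrite ffunE.
apply: seq.perm_map; apply: uniq_perm.
- by rewrite map_inj_uniq ?enum_uniq //; exact: perm_inj.
- exact: enum_uniq.
- move=> i; rewrite mem_enum; apply/mapP; exists (tperm s t i); first by rewrite mem_enum.
  by rewrite tpermK.
Qed.

Lemma exists_max (S : finType) (F : S -> int) (l : seq S) (i0 : S) :
  i0 \in l -> exists2 w, w \in l & forall j, j \in l -> F j <= F w.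
Proof.
elim: l i0 => // a l IH i0 _.
case: l IH => [|c l] IH.
  by exists a; [rewrite mem_head | move=> j; rewrite mem_seq1 => /eqP ->].
have [w wl Hw] := IH c (mem_head _ _).
case: (leP (F a) (F w)) => h.
  exists w; first by rewrite in_cons wl orbT.
  by move=> j; rewrite in_cons => /orP[/eqP ->|jl] //; exact: Hw.
exists a; first by rewrite mem_head.
move=> j; rewrite in_cons => /orP[/eqP ->|jl] //.
exact: le_trans (Hw j jl) (ltW h).
Qed.

Lemma step_exists (S : finType) (b : setfun S) (K : {ffun S -> int} -> Prop) m m' :
  integral_submodular b -> (forall x, K x <-> in_base b x) ->
  dec_min K m -> dec_min K m' -> m != m' ->
  exists s t, [/\ m s < m' s, m' t < m t, m t = m s + 1, m' s <= m t
                & K (m + chi s - chi t)].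
Proof.
move=> bs HK dm dm' ne.
have [Km _] := dm. have [Km' _] := dm'.
have bm : in_base b m by apply/HK.
have bm' : in_base b m' by apply/HK.
pose D := [set i | m i != m' i].
pose F i := if m i <= m' i then m' i else m i.
have [i0 i0D] : exists i0, i0 \in D.
  case/boolP: [exists i, m i != m' i] => [/existsP[i h]|H]; first by exists i; rewrite inE.
  exfalso; move/negP: ne; apply; apply/eqP/ffunP => i; apply/eqP.
  by move: H; rewrite negb_exists => /forallP /(_ i); rewrite negbK.
have i0e : i0 \in enum D by rewrite mem_enum.
have [w wD Hw] := exists_max F i0e.
rewrite mem_enum in wD.
have Hw' : forall j, j \in D -> F j <= F w by move=> j jD; apply: Hw; rewrite mem_enum.
have case1 : forall w1, w1 \in D -> m' w1 < m w1 -> (forall j, j \in D -> F j <= m w1) ->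
  exists s t, [/\ m s < m' s, m' t < m t, m t = m s + 1, m' s <= m t
                & K (m + chi s - chi t)].
  move=> w' wD' lt Hw2.
  have [u [lu bu]] := exchange bs bm bm' lt.
  have Ku : K (m + chi u - chi w') by apply/HK.
  have ineq := decmin_ineq dm Ku.
  have uD : u \in D by rewrite inE (lt_eqF lu).
  have Fu := Hw2 u uD; rewrite /F (ltW lu) in Fu.
  exists u, w'; split => //; lia.
case: (ltgtP (m' w) (m w)) => [lt|gt|eq].
- apply: (case1 w wD lt) => j jD.
  have Fw : F w = m w by rewrite /F leNgt lt.
  by rewrite -Fw; apply: Hw'.
- have Fw : F w = m' w by rewrite /F (ltW gt).
  have [u [lu bu]] := exchange bs bm' bm gt.
  have Ku : K (m' + chi u - chi w) by apply/HK.
  have ineq := decmin_ineq dm' Ku.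
  have uD : u \in D by rewrite inE eq_sym (lt_eqF lu).
  have Fu := Hw' u uD; rewrite Fw /F [m u <= _]leNgt lu /= in Fu.
  apply: (case1 u uD lu) => j jD.
  have := Hw' j jD; rewrite Fw => h; lia.
- by move: wD; rewrite inE eq eqxx.
Qed.

Lemma main_ind (S : finType) (b : setfun S) (K : {ffun S -> int} -> Prop) m' :
  integral_submodular b -> (forall x, K x <-> in_base b x) -> dec_min K m' ->
  forall n m, dec_min K m -> (#|[set i | (m i < m' i)%R]| <= n)%N -> reach_le K n m m'.
Proof.
move=> bs HK dm'.
elim => [|n IH] m dm hc /=.
  have bm : in_base b m by apply/HK; case: dm.
  have bm' : in_base b m' by apply/HK; case: dm'.
  apply: (eq_of_le bm bm') => i; rewrite leNgt; apply/negP => lt.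
  have : i \in [set i | m i < m' i] by rewrite inE.
  by move: hc; rewrite leqn0 => /eqP/cards0_eq ->; rewrite in_set0.
case: (eqVneq m m') => [->|ne]; [by left|right].
have [s [t [ls lt e le Kst]]] := step_exists bs HK dm dm' ne.
have st : s != t by apply/eqP => est; move: e; rewrite est; lia.
have ts : t != s by rewrite eq_sym.
exists (m + chi s - chi t); split.
  split => //; exists s, t; split => //.
apply: IH.
  split => // y Ky; rewrite decvec_swap //; exact: dm.2 y Ky.
rewrite -ltnS; apply: leq_trans hc; apply: proper_card; apply/properP; split.
  apply/subsetP => i; rewrite !inE stepE => h.
  case: (eqVneq i s) => [eis|ns].
    by subst i; move: h; rewrite !eqxx ?(negbTE st) /=; lia.
  case: (eqVneq i t) => [eit|nt].
    by subst i; move: h; rewrite !eqxx ?(negbTE ts) /=; lia.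
  by move: h; rewrite (negbTE ns) (negbTE nt) /= addr0 subr0.
exists s; first by rewrite inE.
by rewrite inE stepE eqxx (negbTE st) /= -leNgt; lia.
Qed.

Theorem claim5p3 (S : finType) (K : {ffun S -> int} -> Prop) (m : {ffun S -> int}) :
  M_convex K -> dec_min K m ->
  forall m' : {ffun S -> int}, dec_min K m' -> reach_le K #|S| m m'.
Proof.
move=> [b [bs HK]] dm m' dm'.
apply: (main_ind bs HK dm' dm); exact: max_card.
Qed.
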